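(* Let $f\in L^2(\mathbb{R},\Phi)$ be a convex function that is not identically zero. Then $f$ has Hermite rank at most $2$, i.e. at least one of $\int f h_0\,d\Phi$, $\int f h_1\,d\Phi$, $\int f h_2\,d\Phi$ is nonzero.
   Context: $\Phi$ denotes the standard normal distribution on $\mathbb{R}$ and $L^2(\mathbb{R},\Phi)=\{f:\int f^2\,d\Phi<\infty\}$. The Hermite polynomials are $h_m(x)=(-1)^m e^{x^2/2}\frac{d^m}{dx^m}e^{-x^2/2}$, $m=0,1,2,\dots$ (so $h_0=1$, $h_1(x)=x$, $h_2(x)=x^2-1$); they form an orthogonal basis of $L^2(\mathbb{R},\Phi)$, so every $f\in L^2(\mathbb{R},\Phi)$ has a unique expansion $f=\sum_{i\ge0}c_ih_i$. The Hermite rank of a nonzero $f$ is the smallest index $i$ with $c_i\neq 0$, equivalently with $\int f h_i\,d\Phi\ne 0$. *)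

(* Defs.v *)
From HB Require Import structures.
From mathcomp Require Import all_boot all_order all_algebra.
From mathcomp Require Import all_classical all_reals all_analysis.
Set Implicit Arguments. Unset Strict Implicit. Unset Printing Implicit Defensive.
Import Order.TTheory GRing.Theory Num.Theory.
Local Open Scope ring_scope.

Definition Phi (R : realType) := normal_prob (0 : R) 1.
Arguments Phi R : clear implicits.

Definition hermite (R : realType) (m : nat) (x : R) : R :=
  (-1) ^+ m * expR (x ^+ 2 / 2)
  * (iter m (@derive1 R R) (fun y : R => expR (- (y ^+ 2) / 2))) x.

Definition in_L2_Phi (R : realType) (f : R -> R) : Prop :=
  measurable_fun setT f /\
  (\int[Phi R]_x ((f x) ^+ 2)%:E < +oo)%E.

(* Main.v *)
Require Import Defs.
From HB Require Import structures.
From mathcomp Require Import all_boot all_order all_algebra.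
From mathcomp Require Import all_classical all_reals all_analysis.
Import Order.TTheory GRing.Theory Num.Theory.
Local Open Scope classical_set_scope.
Local Open Scope ring_scope.
From mathcomp Require Import measurable_realfun.
From mathcomp Require Import ring lra.
Set Implicit Arguments. Unset Strict Implicit. Unset Printing Implicit Defensive.

Section Real.
Variable R : realType.

Definition cvxP (f : R -> R) := forall t x y : R, 0 <= t -> t <= 1 ->
  f (t * x + (1 - t) * y) <= t * f x + (1 - t) * f y.

Lemma cvxP_refl f : cvxP f -> cvxP (fun x => f (- x)).
Proof.
move=> hc t x y t0 t1 /=.
by rewrite (_ : - (t * x + (1 - t) * y) = t * - x + (1 - t) * - y); [apply: hc|ring].
Qed.

Lemma cvx_between f : cvxP f -> forall x y z, x <= y -> y <= z -> f x < 0 -> f z < 0 -> f y < 0.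
Proof.
move=> hc x y z xy yz fx fz.
have [exz|nxz] := eqVneq x z.
  have -> : y = x by apply/eqP; rewrite eq_le xy /= exz yz.
  exact: fx.
have xz : x < z by rewrite lt_neqAle nxz (le_trans xy yz).
pose t := (z - y) / (z - x).
have zx0 : 0 < z - x by rewrite subr_gt0.
have t0 : 0 <= t by rewrite divr_ge0 // ?subr_ge0 // ltW.
have t1 : t <= 1 by rewrite ler_pdivrMr // mul1r lerD2l lerN2.
have := hc t x z t0 t1.
have -> : t * x + (1 - t) * z = y.
  rewrite /t; field; by rewrite subr_eq0 eq_sym.
move=> h; apply: (le_lt_trans h).
have [->|tp] := eqVneq t 0; first by rewrite mul0r add0r subr0 mul1r.
have tp' : 0 < t by rewrite lt_neqAle eq_sym tp t0.
nra.
Qed.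

Lemma nrm2 (u : R) : - `|u| <= u <= `|u|.
Proof. by rewrite -ler_norml. Qed.

Lemma cvx_dir f : cvxP f -> forall x0 e t, (e = 1 \/ e = -1) -> 0 <= t -> t <= 1 ->
  `|f (x0 + e * t) - f x0| <= t * (`|f (x0 + 1) - f x0| + `|f (x0 - 1) - f x0|).
Proof.
move=> hc x0 e t he t0 t1.
have up : f (x0 + e * t) - f x0 <= t * (f (x0 + e) - f x0).
  have := hc t (x0 + e) x0 t0 t1.
  rewrite (_ : t * (x0 + e) + (1 - t) * x0 = x0 + e * t); last by ring.
  move=> h; lra.
have lo : - (t * (f (x0 - e) - f x0)) <= f (x0 + e * t) - f x0.
  have h1 := hc t (x0 - e) x0 t0 t1.
  rewrite (_ : t * (x0 - e) + (1 - t) * x0 = x0 - e * t) in h1; last by ring.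
  have h2 : 0 <= 2^-1 :> R by rewrite invr_ge0.
  have h3 : 2^-1 <= 1 :> R by rewrite invf_le1 // ler1n.
  have h4 := hc 2^-1 (x0 + e * t) (x0 - e * t) h2 h3.
  rewrite (_ : 2^-1 * (x0 + e * t) + (1 - 2^-1) * (x0 - e * t) = x0) in h4; last by field.
  rewrite (_ : 1 - 2^-1 = 2^-1 :> R) in h4; last by field.
  lra.
have /andP[a2 a1] := nrm2 (f (x0 + 1) - f x0).
have /andP[a4 a3] := nrm2 (f (x0 - 1) - f x0).
rewrite ler_norml; case: he => -> in up lo *.
  rewrite mul1r in up lo *; nra.
rewrite opprK mulN1r in up lo *; nra.
Qed.

Lemma cvx_cont f : cvxP f -> forall x0 c, 0 < c -> exists d, 0 < d /\
  forall x, `|x - x0| <= d -> `|f x - f x0| <= c.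
Proof.
move=> hc x0 c c0.
pose K := `|f (x0 + 1) - f x0| + `|f (x0 - 1) - f x0| + 1.
have K0 : 0 < K by rewrite /K ltr_wpDl // addr_ge0.
exists (Num.min 1 (c / K)); split; first by rewrite lt_min ltr01 divr_gt0.
move=> x; rewrite le_min => /andP[h1 h2].
have hx : exists e, (e = 1 \/ e = -1) /\ x = x0 + e * `|x - x0|.
  have [xp|xn] := leP x0 x.
    exists 1; split; first by left.
    by rewrite mul1r ger0_norm ?subr_ge0 // addrC subrK.
  exists (-1); split; first by right.
  by rewrite ltr0_norm ?subr_lt0 // mulN1r opprK addrC subrK.
case: hx => e [he ex].
have := cvx_dir hc x0 he (normr_ge0 _) h1; rewrite -ex => h.
apply: (le_trans h).
have : `|x - x0| * K <= c by rewrite -ler_pdivlMr.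
have := normr_ge0 (x - x0).
rewrite /K; nra.
Qed.


Lemma right_side f : cvxP f -> forall x0 d : R, 0 < d ->
  (forall x, `|x - x0| <= d -> f x < 0) ->
  exists al be et : R, 0 < et /\ (forall x : R, x0 <= x -> 0 <= f x * (al + be * x)) /\
    (forall x, x <= x0 + d / 2 -> al + be * x <= - et).
Proof.
move=> hc x0 d d0 hd.
case: (pselect (exists z, x0 <= z /\ 0 <= f z)) => [[z [hz fz]]|nz]; last first.
  exists (-1), 0, 1; split; first exact: ltr01.
  split; last by move=> x _; rewrite mul0r addr0.
  move=> x hx; rewrite mul0r addr0 mulrN1 oppr_ge0.
  case: (leP (f x) 0) => // fx; exfalso; apply: nz; exists x; split => //.
  exact: ltW.
pose S := [set x | x0 <= x /\ f x < 0].
have fx0 : f x0 < 0 by apply: hd; rewrite subrr normr0 ltW.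
have Sx0 : S x0 by split.
have Sub : forall x, S x -> x <= z.
  move=> x [hx fx]; rewrite leNgt; apply/negP => zx.
  have := cvx_between hc hz (ltW zx) fx0 fx.
  by rewrite ltNge fz.
have hS : has_sup S by split; [exists x0 | exists z => x Sx; exact: Sub].
have Sd : S (x0 + d).
  split; first by rewrite lerDl ltW.
  by apply: hd; rewrite addrAC subrr add0r ger0_norm // ltW.
have bd : x0 + d <= sup S by apply: sup_upper_bound.
exists (- sup S), 1, (d / 2); split; first by rewrite divr_gt0.
split=> x hx; last by rewrite mul1r; lra.
rewrite mul1r.
case: (ltP (f x) 0) => fx.
  have : x <= sup S by apply: sup_upper_bound => //; split.
  move=> h; nra.
case: (leP (sup S) x) => h; first by rewrite addrC mulr_ge0 // subr_ge0.
have eps0 : 0 < sup S - x by rewrite subr_gt0.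
have [e Se he] := sup_adherent eps0 hS.
rewrite opprB addrC subrK in he.
have := cvx_between hc hx (ltW he) fx0 Se.2.
by rewrite ltNge fx.
Qed.


Lemma quad_witness f : cvxP f -> (exists x, f x != 0) ->
  exists a b c x0 d e : R, 0 < d /\ 0 < e /\
    (forall x, 0 <= f x * (a + b * x + c * x ^+ 2)) /\
    (forall x, `|x - x0| <= d -> e <= f x * (a + b * x + c * x ^+ 2)).
Proof.
move=> hc [x1 fx1].
case: (pselect (exists x0, f x0 < 0)) => [[x0 fx0]|nneg]; last first.
  have f0 : forall x, 0 <= f x.
    move=> x; case: (leP 0 (f x)) => // h; exfalso; apply: nneg; by exists x.
  have fx1p : 0 < f x1 by rewrite lt_neqAle eq_sym fx1 f0.
  have c0 : 0 < f x1 / 2 by rewrite divr_gt0.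
  have [d [d0 hd]] := cvx_cont hc x1 c0.
  exists 1, 0, 0, x1, d, (f x1 / 2); split => //; split => //.
  split=> x; rewrite !mul0r !addr0 mulr1 //.
  move=> /hd; rewrite ler_norml => /andP[h _]; lra.
have c0 : 0 < - f x0 / 2 by rewrite divr_gt0 // oppr_gt0.
have [d [d0 hd]] := cvx_cont hc x0 c0.
have hle : forall x, `|x - x0| <= d -> f x <= f x0 / 2.
  move=> x /hd; rewrite ler_norml => /andP[_ h]; lra.
have hneg : forall x, `|x - x0| <= d -> f x < 0.
  move=> x /hle h; lra.
have [alR [beR [etR [etR0 [R1 R2]]]]] := right_side hc d0 hneg.
have hneg' : forall x, `|x - - x0| <= d -> f (- x) < 0.
  by move=> x h; apply: hneg; rewrite -opprD normrN; rewrite opprK in h.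
have [alL [beL [etL [etL0 [L1 L2]]]]] := right_side (cvxP_refl hc) d0 hneg'.
have key : forall x, - (alL * alR) + (beL * alR - alL * beR) * x + beL * beR * x ^+ 2 =
    - ((alL + beL * (- x)) * (alR + beR * x)) by move=> x; ring.
have d20 : 0 < d / 2 by rewrite divr_gt0.
exists (- (alL * alR)), (beL * alR - alL * beR), (beL * beR), x0, (d / 2),
  ((- f x0 / 2) * (etL * etR)).
split => //; split; first by rewrite mulr_gt0 // mulr_gt0.
split=> x; rewrite key.
  case: (leP x0 x) => hx.
    have h1 := R1 x hx.
    have h2 := L2 (- x) ltac:(lra).
    nra.
  have h1 := L1 (- x) ltac:(lra).
  rewrite /= opprK in h1.
  have h2 := R2 x ltac:(lra).
  nra.
rewrite ler_norml => /andP[hx1 hx2].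
have h1 := hle x ltac:(rewrite ler_norml; apply/andP; split; lra).
have h2 := R2 x ltac:(lra).
have h3 := L2 (- x) ltac:(lra).
set sL := alL + beL * - x in h3 *.
set sR := alR + beR * x in h2 *.
have p : etL * etR <= sL * sR by nra.
have p0 : 0 < etL * etR by rewrite mulr_gt0.
have q0 : - f x0 / 2 <= - f x by lra.
rewrite mulrN -mulNr.
apply: ler_pM => //; [lra | exact: ltW].
Qed.

End Real.

Section H.
Variable R : realType.
Let g := fun y : R => expR (- (y ^+ 2) / 2).

Let du (x : R) : is_derive x 1 (fun y : R => - (y ^+ 2) / 2) (- x).
Proof.
have e : (fun y : R => - (y ^+ 2) / 2) = (2^-1 : R) *: (- ((@id R) ^+ 2)).
  apply/funext => y /=. by rewrite !fctE /= mulrC.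
rewrite e.
apply: is_derive_eq.
rewrite /=.
rewrite expr1 /GRing.scale /= mulr1 mulrN mulrA mulVf ?mul1r //.
Qed.


Let dg (x : R) : is_derive x 1 g (g x * - x).
Proof. rewrite /g. exact: (is_derive1_comp (f:=expR) (g := fun y => - (y ^+ 2) / 2)). Qed.

Let eg (x : R) : expR (x ^+ 2 / 2) * g x = 1.
Proof. by rewrite /g -expRD mulNr addrN expR0. Qed.

Let g1 : derive1 g = fun y => g y * - y.
Proof. by apply/funext => y; rewrite derive1E; have [_ ->] := dg y. Qed.

Lemma hermite0 (x : R) : hermite 0 x = 1.
Proof. by rewrite /hermite /= expr0 mul1r eg. Qed.

Lemma hermite1 (x : R) : hermite 1 x = x.
Proof. by rewrite /hermite /= g1 expr1 mulrA mulN1r mulNr eg mulN1r opprK. Qed.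

Lemma hermite2 (x : R) : hermite 2 x = x ^+ 2 - 1.
Proof.
rewrite /hermite /= g1 sqrrN expr1n mul1r.
have h : is_derive x 1 (fun y => g y * - y) (g x * (-1) + (- x) * (g x * - x)).
  have -> : (fun y => g y * - y) = g * (-%R) by apply/funext.
  have H := is_deriveM (dg x) (is_deriveNid x 1).
  exact H.
rewrite derive1E; have [_ ->] := h.
rewrite (_ : g x * -1 + -x * (g x * -x) = g x * (x ^+ 2 - 1)); last by ring.
by rewrite mulrA eg mul1r.
Qed.
End H.

Section M.
Variable R : realType.

Lemma pdf_bound (x : R) : x ^+ 4 * normal_pdf 0 1 x <=
  (64 * normal_peak 1 / normal_peak (Num.sqrt 2)) * normal_pdf 0 (Num.sqrt 2) x.
Proof.
have s0 : Num.sqrt 2 != 0 :> R by rewrite sqrtr_eq0 -ltNge ltr0n.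
rewrite /normal_pdf oner_eq0 (negbTE s0) /normal_fun subr0 expr1n sqr_sqrtr ?ler0n //.
set u := expR (- (x ^+ 2 / 8)).
have e1 : expR (- x ^+ 2 / (1 *+ 2)) = u ^+ 4.
  by rewrite /u -expRM_natl; congr expR; field.
have e2 : expR (- x ^+ 2 / (2 *+ 2)) = u ^+ 2.
  by rewrite /u -expRM_natl; congr expR; rewrite -mulr_natr; field.
rewrite e1 e2.
have p1 : 0 < normal_peak (1 : R) by apply: normal_peak_gt0; rewrite oner_eq0.
have ps : 0 < normal_peak (Num.sqrt 2 : R) by apply: normal_peak_gt0.
set v := expR (x ^+ 2 / 8).
have uv : u * v = 1 by rewrite /u /v mulrC expRxMexpNx_1.
have u0 : 0 < u by apply: expR_gt0.
have v1 : 1 + x ^+ 2 / 8 <= v by apply: expR_ge1Dx.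
have A0 : 0 <= x ^+ 2 by apply: sqr_ge0.
have k : x ^+ 2 * u <= 8 by nra.
have k2 : x ^+ 4 * u ^+ 2 <= 64.
  have -> : x ^+ 4 * u ^+ 2 = (x ^+ 2 * u) ^+ 2 by ring.
  have : 0 <= x ^+ 2 * u by apply: mulr_ge0 => //; apply: ltW.
  nra.
rewrite (_ : 64 * normal_peak 1 / normal_peak (Num.sqrt 2) * (normal_peak (Num.sqrt 2) * u ^+ 2)
   = 64 * normal_peak 1 * u ^+ 2); last by field; rewrite gt_eqF.
have : 0 < u ^+ 2 by apply: exprn_gt0.
move=> u2.
rewrite (_ : x ^+ 4 * (normal_peak 1 * u ^+ 4) = (x ^+ 4 * u ^+ 2) * (normal_peak 1 * u ^+ 2)); last by ring.
rewrite -[X in _ <= X]mulrA; apply: ler_wpM2r => //.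
by apply: mulr_ge0; apply: ltW.
Qed.

Local Notation mu := (@lebesgue_measure R).

Lemma Phi_ge0_integral (h : R -> \bar R) : measurable_fun [set: R] h -> (forall x, (0 <= h x)%E) ->
  (\int[Phi R]_x h x = \int[mu]_x (h x * (normal_pdf 0 1 x)%:E))%E.
Proof.
move=> mh h0.
rewrite /Phi -(Radon_Nikodym_SigmaFinite.change_of_variables (normal_prob_dominates 0 1)) //.
apply: ae_eq_integral => //.
- apply: emeasurable_funM => //.
  apply: (measurable_int mu).
  exact: Radon_Nikodym_SigmaFinite.f_integrable (normal_prob_dominates 0 1).
- apply: emeasurable_funM => //; apply/measurable_EFinP.
  exact: measurable_normal_pdf.
apply: ae_eqe_mul2l.
apply: ae_eq_sym.
apply: integral_ae_eq => //.
- exact: integrable_normal_pdf.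
- apply: (measurable_int mu).
  exact: Radon_Nikodym_SigmaFinite.f_integrable (normal_prob_dominates 0 1).
- move=> E _ mE.
  by rewrite -Radon_Nikodym_SigmaFinite.f_integral //; exact: normal_prob_dominates.
Qed.

Lemma mom4 : (\int[Phi R]_x ((x ^+ 4)%:E) < +oo)%E.
Proof.
have m4 : measurable_fun [set: R] (fun x : R => (x ^+ 4)%:E).
  by apply/measurable_EFinP; exact: exprn_measurable.
rewrite Phi_ge0_integral //; last by move=> x; rewrite lee_fin; exact: exprn_even_ge0.
pose C : R := 64 * normal_peak 1 / normal_peak (Num.sqrt 2).
have s0 : Num.sqrt 2 != 0 :> R by rewrite sqrtr_eq0 -ltNge ltr0n.
have C0 : 0 <= C.
  by rewrite /C mulr_ge0 // ?invr_ge0 ?normal_peak_ge0 // mulr_ge0 // normal_peak_ge0.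
apply: (@le_lt_trans _ _ (\int[mu]_x (C%:E * (normal_pdf 0 (Num.sqrt 2) x)%:E))%E).
  apply: ge0_le_integral => //.
  - by move=> x _; rewrite -EFinM lee_fin mulr_ge0 ?exprn_even_ge0 ?normal_pdf_ge0.
  - apply: emeasurable_funM => //; apply/measurable_EFinP.
    exact: measurable_normal_pdf.
  - apply: measurable_funeM; apply/measurable_EFinP.
    exact: measurable_normal_pdf.
  - by move=> x _; rewrite -!EFinM lee_fin; exact: pdf_bound.
rewrite ge0_integralZl //.
- by rewrite integral_normal_pdf mule1 ltry.
- by apply/measurable_EFinP; exact: measurable_normal_pdf.
- by move=> x _; rewrite lee_fin normal_pdf_ge0.
Qed.


Lemma ge0_fin_integrable (h : R -> R) : measurable_fun [set: R] h -> (forall x, 0 <= h x) ->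
  (\int[Phi R]_x (h x)%:E < +oo)%E -> (Phi R).-integrable [set: R] (fun x => (h x)%:E).
Proof.
move=> mh h0 fin; apply/integrableP; split; first exact/measurable_EFinP.
under eq_integral => x _ do rewrite gee0_abs ?lee_fin //.
exact: fin.
Qed.

Lemma intg (f p : R -> R) : in_L2_Phi f -> measurable_fun [set: R] p ->
  (forall x, `|p x| <= 1 + x ^+ 2) ->
  (Phi R).-integrable [set: R] (fun x => (f x * p x)%:E).
Proof.
move=> [mf f2] mp pb.
have i1 : (Phi R).-integrable [set: R] (fun x => (f x ^+ 2)%:E).
  apply: ge0_fin_integrable => //; last by move=> x; apply: sqr_ge0.
  exact: measurable_funX.
have i2 : (Phi R).-integrable [set: R] (fun x => (1 : R)%:E).
  apply: ge0_fin_integrable => //.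
  rewrite integral_cst // mul1e.
  rewrite [X in (X < _)%E](_ : _ = 1%E) ?ltry //.
  exact: integral_normal_pdf.
have i3 : (Phi R).-integrable [set: R] (fun x => (x ^+ 4)%:E).
  apply: ge0_fin_integrable; [exact: exprn_measurable | move=> x; exact: exprn_even_ge0 | exact: mom4].
have i := integrableD measurableT (integrableD measurableT i1 i2) i3.
apply: (le_integrable measurableT _ _ i).
  by apply/measurable_EFinP; apply: measurable_funM.
move=> x _ /=; rewrite lee_fin.
rewrite normrM.
have a := pb x; have b := normr_ge0 (p x); have c := normr_ge0 (f x).
have d : `|f x| ^+ 2 = f x ^+ 2 by rewrite real_normK // num_real.
have e : 0 <= x ^+ 2 by apply: sqr_ge0.
have g : x ^+ 4 = (x ^+ 2) ^+ 2 by rewrite -exprM.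
rewrite [X in _ <= X]ger0_norm; last first.
  by rewrite addr_ge0 ?exprn_even_ge0 // addr_ge0 // sqr_ge0.
rewrite g -d.
set F := `|f x| in b c d *; set X := x ^+ 2 in a e g *.
have h1 : F * `|p x| <= F * (1 + X) by apply: ler_wpM2l.
have h2 : 0 <= (F - (1 + X)) ^+ 2 by apply: sqr_ge0.
have h3 : 0 <= (X - 1) ^+ 2 by apply: sqr_ge0.
nra.
Qed.

Lemma pos_int (g : R -> R) (x0 d e : R) : measurable_fun [set: R] g -> 0 < d -> 0 < e ->
  (forall x, 0 <= g x) -> (forall x, `|x - x0| <= d -> e <= g x) ->
  (0 < \int[Phi R]_x (g x)%:E)%E.
Proof.
move=> mg d0 e0 g0 ge.
rewrite Phi_ge0_integral //; last by apply/measurable_EFinP.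
pose M := `|x0| + d.
pose m := normal_peak 1 * expR (- (M ^+ 2) / 2).
have m0 : 0 < m by rewrite mulr_gt0 ?expR_gt0 // normal_peak_gt0 // oner_eq0.
pose I := `[x0 - d, x0 + d]%classic.
have mI : measurable I by apply: measurable_itv.
apply: (@lt_le_trans _ _ (\int[mu]_x ((e * m)%:E * (\1_I x)%:E))%E); last first.
  apply: ge0_le_integral => //.
  - move=> x _; rewrite mule_ge0 // lee_fin ?indicE //.
      by rewrite mulr_ge0 // ltW.
  - apply: measurable_funeM; apply/measurable_EFinP; exact: measurable_indic.
  - apply: emeasurable_funM; apply/measurable_EFinP => //.
    exact: measurable_normal_pdf.
  move=> x _; rewrite -!EFinM lee_fin indicE.
  case: (boolP (x \in I)) => xI; last first.
    by rewrite mulr0 mulr_ge0 ?normal_pdf_ge0.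
  rewrite mulr1.
  have hx : `|x - x0| <= d.
    move: xI; rewrite /I inE /= in_itv /= => /andP[h1 h2].
    rewrite ler_norml; apply/andP; split; lra.
  apply: ler_pM; [exact: ltW | exact: ltW | exact: ge |].
  rewrite /normal_pdf oner_eq0 /normal_fun subr0 expr1n /m.
  apply: ler_wpM2l; first exact: normal_peak_ge0.
  rewrite ler_expR.
  have : x ^+ 2 <= M ^+ 2.
    have := ler_normD (x - x0) x0; rewrite subrK => h.
    have hM : `|x| <= M by rewrite /M; lra.
    have := ler_pM (normr_ge0 x) (normr_ge0 x) hM hM.
    by rewrite -normrM -!expr2 ger0_norm ?sqr_ge0.
  move=> h; rewrite !mulNr lerN2 ler_pM2r //.
rewrite ge0_integralZl //; last first.
- by rewrite lee_fin mulr_ge0 // ltW.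
- by apply/measurable_EFinP; exact: measurable_indic.
rewrite integral_indic // setIT /I.
have := lebesgue_measure_itv `[x0 - d, x0 + d]; rewrite /= lte_fin.
move=> ->.
have -> : x0 - d < x0 + d by lra.
rewrite -EFinD -EFinM lte_fin; apply: mulr_gt0; first exact: mulr_gt0.
lra.
Qed.

End M.

Lemma cvx (R : realType) (f : R -> R) : convex_function [set: R] f -> cvxP f.
Proof.
move=> cf t x y t0 t1.
have := cf (Itv01 t0 t1) x y; rewrite !inE => /(_ I I).
by [].
Qed.

Theorem lemma2 (R : realType) (f : R -> R) :
  in_L2_Phi f ->
  convex_function [set: R] f ->
  (exists x : R, f x != 0) ->
  (\int[Phi R]_x (f x * hermite 0 x)%:E != 0)%E \/
  (\int[Phi R]_x (f x * hermite 1 x)%:E != 0)%E \/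
  (\int[Phi R]_x (f x * hermite 2 x)%:E != 0)%E.
Proof.
move=> hL hcf hne.
have hc := cvx hcf.
have mf := hL.1.
have [a [b [c [x0 [d [e [d0 [e0 [hq hn]]]]]]]]] := quad_witness hc hne.
have i0 : (Phi R).-integrable [set: R] (fun x => (f x * 1)%:E).
  apply: intg => // x.
  by rewrite normr1 lerDl sqr_ge0.
have i1 : (Phi R).-integrable [set: R] (fun x => (f x * x)%:E).
  apply: intg => // x.
  rewrite ler_norml; have := sqr_ge0 (x - 1); have := sqr_ge0 (x + 1).
  move=> h1 h2; apply/andP; split; nra.
have i2 : (Phi R).-integrable [set: R] (fun x => (f x * (x ^+ 2 - 1))%:E).
  have m2 : measurable_fun [set: R] (fun x : R => x ^+ 2 - 1).
    by apply: measurable_funB => //; exact: exprn_measurable.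
  apply: intg => //.
  move=> x; rewrite ler_norml; have := sqr_ge0 x.
  move=> h1; apply/andP; split; lra.
have pos : (0 < \int[Phi R]_x (f x * (a + b * x + c * x ^+ 2))%:E)%E.
  apply: (pos_int (x0 := x0) (d := d) (e := e)) => //.
  apply: measurable_funM => //.
  apply: measurable_funD; last first.
    by apply: measurable_funM => //; exact: exprn_measurable.
  by apply: measurable_funD => //; apply: measurable_funM.
have lin : (\int[Phi R]_x (f x * (a + b * x + c * x ^+ 2))%:E =
   (a + c)%:E * \int[Phi R]_x (f x * 1)%:E + b%:E * \int[Phi R]_x (f x * x)%:E
   + c%:E * \int[Phi R]_x (f x * (x ^+ 2 - 1))%:E)%E.
  transitivity (\int[Phi R]_x (((a + c)%:E * (f x * 1)%:E + b%:E * (f x * x)%:E)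
     + c%:E * (f x * (x ^+ 2 - 1))%:E))%E.
    by apply: eq_integral => x _; rewrite -!EFinM -!EFinD; congr EFin; ring.
  rewrite integralD //; last 2 first.
  - by apply: integrableD => //; apply: integrableZl.
  - by apply: integrableZl.
  rewrite integralD //; try by apply: integrableZl.
  by rewrite !integralZl.
have e0' : forall k, (\int[Phi R]_x (f x * hermite k x)%:E = \int[Phi R]_x (f x * hermite k x)%:E)%E by [].
have -> : (\int[Phi R]_x (f x * hermite 0 x)%:E = \int[Phi R]_x (f x * 1)%:E)%E.
  by apply: eq_integral => x _; rewrite hermite0.
have -> : (\int[Phi R]_x (f x * hermite 1 x)%:E = \int[Phi R]_x (f x * x)%:E)%E.
  by apply: eq_integral => x _; rewrite hermite1.
have -> : (\int[Phi R]_x (f x * hermite 2 x)%:E = \int[Phi R]_x (f x * (x ^+ 2 - 1))%:E)%E.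
  by apply: eq_integral => x _; rewrite hermite2.
case: eqVneq => [h0|]; last by left.
right; case: eqVneq => [h1|]; last by left.
right; apply/negP => /eqP h2.
by move: pos; rewrite lin h0 h1 h2 !mule0 !adde0 ltxx.
Qed.
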